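(* Let $\mathcal{V}$ be a finite set of Boolean variables, let $B^{inv}(\mathcal{V}\cup\mathbf{X}\mathcal{V})$ be a pure Boolean expression over the atoms $p$ and $\mathbf{X}p$ ($p\in\mathcal{V}$), and let $B^{fair}(\mathcal{V})$ be a pure Boolean expression over $\mathcal{V}$. For $\phi^c=\mathbf{G}\,B^{inv}(\mathcal{V}\cup\mathbf{X}\mathcal{V})\wedge\mathbf{F}\mathbf{G}\,\neg B^{fair}(\mathcal{V})$ we have $\dim(L(\phi^c))=\dim\big(L(\mathbf{G}(B^{inv}\wedge\neg B^{fair}))\big)$.
   Context: Formulae are interpreted over $\omega$-words $w=w_1w_2\dots$ over $\Sigma=2^{\mathcal{V}}$; $L(\phi)$ is the set of $\omega$-words satisfying $\phi$. $w\models p$ iff $p\in w_1$, $w\models\mathbf{X}p$ iff $p\in w_2$; $w\models\mathbf{G}\psi$ iff every suffix $w^j=w_jw_{j+1}\dots$ satisfies $\psi$, and $w\models\mathbf{F}\psi$ iff some suffix $w^j$ satisfies $\psi$. Let $r=|\Sigma|$. For $L\subseteq\Sigma^\omega$, the $\alpha$-dimensional Hausdorff outer measure is $m_\alpha(L)=\lim_{n\to\infty}\inf_{V\in\mathcal{L}_n}\sum_{v\in V}r^{-\alpha|v|}$, where $\mathcal{L}_n$ is the collection of sets $V\subseteq\Sigma^*$ of words of length at least $n$ such that every word of $L$ has a prefix in $V$; the Hausdorff dimension $\dim(L)$ is the unique $\bar\alpha$ with $m_\alpha(L)=\infty$ for $\alpha<\bar\alpha$ and $m_\alpha(L)=0$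 for $\alpha>\bar\alpha$. *)

(* Defs.v *)
From HB Require Import structures.
From mathcomp Require Import all_boot all_order all_algebra.
From mathcomp Require Import all_classical all_reals all_analysis.
Set Implicit Arguments. Unset Strict Implicit. Unset Printing Implicit Defensive.
Import Order.TTheory GRing.Theory Num.Theory.
Local Open Scope classical_set_scope.
Local Open Scope ring_scope.

(* Alphabet Sigma = 2^V = {set V};  omega-words are maps nat -> {set V},
   indexed from 0 (w 0 is the paper's w_1). Finite words are seq {set V}. *)
Definition oword (V : finType) := nat -> {set V}.

Inductive bexp (A : Type) : Type :=
| BTrue : bexp A
| BFalse : bexp A
| BAtom : A -> bexp A
| BNot : bexp A -> bexp A
| BAnd : bexp A -> bexp A -> bexp A
| BOr : bexp A -> bexp A -> bexp A.

Fixpoint beval (A : Type) (val : A -> bool) (b : bexp A) : bool :=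
  match b with
  | BTrue => true
  | BFalse => false
  | BAtom a => val a
  | BNot b1 => ~~ beval val b1
  | BAnd b1 b2 => beval val b1 && beval val b2
  | BOr b1 b2 => beval val b1 || beval val b2
  end.

(* Atoms of B^inv: inl p stands for p, inr p stands for X p. *)
Definition inv_val (V : finType) (w : oword V) (j : nat) (a : V + V) : bool :=
  match a with
  | inl p => p \in w j
  | inr p => p \in w j.+1
  end.

Definition suffix (V : finType) (w : oword V) (j : nat) : oword V :=
  fun i => w (j + i)%N.

Definition sat_inv (V : finType) (Binv : bexp (V + V)) (w : oword V) : bool :=
  beval (inv_val w 0) Binv.
Definition sat_fair (V : finType) (Bfair : bexp V) (w : oword V) : bool :=
  beval (fun p => p \in w 0%N) Bfair.

Definition L_phic (V : finType) (Binv : bexp (V + V)) (Bfair : bexp V)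
  : set (oword V) :=
  [set w | (forall j, sat_inv Binv (suffix w j)) /\
           (exists i, forall k, ~~ sat_fair Bfair (suffix (suffix w i) k))].

Definition L_Ginvnfair (V : finType) (Binv : bexp (V + V)) (Bfair : bexp V)
  : set (oword V) :=
  [set w | forall j, sat_inv Binv (suffix w j) && ~~ sat_fair Bfair (suffix w j)].

Definition oprefix (V : finType) (w : oword V) (k : nat) : seq {set V} :=
  mkseq w k.

Definition covers (V : finType) (L : set (oword V)) (n : nat)
  : set (set (seq {set V})) :=
  [set C | (forall v, C v -> (n <= size v)%N) /\
           (forall w, L w -> exists k, C (oprefix w k))].

Definition alph_size (V : finType) : nat := #|{set V}|.

Section Hausdorff.
Variable R : realType.
Local Open Scope ereal_scope.

Definition hcover_inf (V : finType) (alpha : R) (L : set (oword V)) (n : nat)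
  : \bar R :=
  ereal_inf [set \esum_(v in C) ((alph_size V)%:R `^ (- alpha * (size v)%:R))%:E
            | C in covers L n].

Definition hmeasure (V : finType) (alpha : R) (L : set (oword V)) : \bar R :=
  limn (hcover_inf alpha L).

Definition hdim (V : finType) (L : set (oword V)) : \bar R :=
  ereal_inf [set alpha%:E | alpha in [set a : R | (0 <= a)%R /\ hmeasure a L = 0]].

End Hausdorff.

(* Main.v *)
Require Import Defs.
From mathcomp Require Import all_boot all_order all_algebra.
From mathcomp Require Import all_classical all_reals all_analysis.
From HB Require Import structures.
From mathcomp Require Import all_boot all_order all_algebra.
From mathcomp Require Import all_classical all_reals all_analysis.
Set Implicit Arguments. Unset Strict Implicit. Unset Printing Implicit Defensive.
Import Order.TTheory GRing.Theory Num.Theory.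
Local Open Scope classical_set_scope.
Local Open Scope ring_scope.
Local Open Scope ereal_scope.

Lemma esum_subset_le (R : realType) (T : choiceType) (A B : set T) (a : T -> \bar R) :
  A `<=` B -> \esum_(i in A) a i <= \esum_(i in B) a i.
Proof.
move=> AB; apply: ge_ereal_sup => _ [X [finX XA] <-]; apply: ereal_sup_ubound.
by exists X => //; split => // x /XA/AB.
Qed.

Lemma esum_image_le (R : realType) (T T' : choiceType) (t0 : T) (P : set T)
  (e : T -> T') (a : T' -> \bar R) :
  \esum_(j in e @` P) a j <= \esum_(i in P) a (e i).
Proof.
pose s (y : T') : T := if pselect (exists x, P x /\ e x = y) is left h
  then projT1 (cid h) else t0.
have hs y : (e @` P) y -> P (s y) /\ e (s y) = y.
  move=> [x Px exy]; rewrite /s; case: pselect => [h|[]]; last by exists x.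
  by case: (cid h).
have -> : e @` P = e @` (s @` (e @` P)).
  apply/seteqP; split => y.
    move=> Hy; have [_ E] := hs y Hy; exists (s y) => //; by exists y.
  by move=> [_ [z Hz <-] <-]; have [? _] := hs z Hz; exists (s z).
rewrite esum_image; last first.
  move=> x1 x2; rewrite !inE => -[y1 H1 <-] [y2 H2 <-].
  by have [_ ->] := hs y1 H1; have [_ ->] := hs y2 H2 => ->.
by apply: esum_subset_le => _ [y Hy <-]; have [] := hs y Hy.
Qed.

Lemma suffixS (V : finType) (w : oword V) i j : Defs.suffix (Defs.suffix w i) j = Defs.suffix w (i + j).
Proof. by apply: funext => x; rewrite /Defs.suffix addnA. Qed.

Lemma oprefixD (V : finType) (w : oword V) i k :
  oprefix w (i + k) = oprefix w i ++ oprefix (Defs.suffix w i) k.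
Proof.
rewrite /oprefix /mkseq iotaD map_cat add0n; congr (_ ++ _).
by rewrite -[i]addn0 iotaDl -map_comp addn0.
Qed.
Section A.
Variable R : realType.

Lemma hcover_ge0 (V : finType) (a : R) (L : set (oword V)) n : 0 <= hcover_inf a L n.
Proof.
apply: le_ereal_inf_tmp => _ [C _ <-]; apply: esum_ge0 => x _.
by rewrite lee_fin powR_ge0.
Qed.

Lemma hcover_anti (V : finType) (a : R) (L1 L2 : set (oword V)) n :
  L1 `<=` L2 -> hcover_inf a L1 n <= hcover_inf a L2 n.
Proof.
move=> L12; apply: le_ereal_inf_tmp => _ [C [HC1 HC2] <-]; apply: ereal_inf_lbound.
by exists C => //; split => // w /L12 /HC2.
Qed.

Lemma hcover_nd (V : finType) (a : R) (L : set (oword V)) :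
  nondecreasing_seq (hcover_inf a L).
Proof.
move=> n m nm; apply: le_ereal_inf_tmp => _ [C [HC1 HC2] <-]; apply: ereal_inf_lbound.
by exists C => //; split => // v /HC1; apply: leq_trans.
Qed.

Lemma hmeasure0P (V : finType) (a : R) (L : set (oword V)) :
  hmeasure a L = 0 <-> forall n, hcover_inf a L n = 0.
Proof.
rewrite /hmeasure (cvg_lim _ (ereal_nondecreasing_cvgn (hcover_nd a L))) //.
split.
  move=> H n; apply: le_anti; rewrite hcover_ge0 andbT -H.
  by apply: ereal_sup_ubound; exists n.
move=> H; apply: le_anti; apply/andP; split.
  by apply: ge_ereal_sup => _ [n _ <-]; rewrite H.
by apply: ereal_sup_ubound; exists 0%N => //; rewrite H.
Qed.
End A.
Lemma stepB (R : realType) (V : finType) (Binv : bexp (V + V)) (Bfair : bexp V) (a : R) :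
  (0 <= a)%R -> (forall n, hcover_inf a (L_Ginvnfair Binv Bfair) n = 0) ->
  forall n, hcover_inf a (L_phic Binv Bfair) n = 0.
Proof.
move=> a0 H n; apply: le_anti; rewrite hcover_ge0 andbT.
apply/lee_addgt0Pr => eps eps0; rewrite add0e.
pose f := fun v : seq {set V} => ((alph_size V)%:R `^ (- a * (size v)%:R))%:E.
pose d (u : seq {set V}) : R := (eps / (2 ^ (pickle u).+1)%:R)%R.
have d0 u : (0 < d u)%R by rewrite divr_gt0 // ltr0n expn_gt0.
have : forall u, exists C, covers (L_Ginvnfair Binv Bfair) n C /\
    \esum_(v in C) f v < (d u)%:E.
  move=> u; have : hcover_inf a (L_Ginvnfair Binv Bfair) n < (d u)%:E.
    by rewrite H lte_fin.
  by move/ereal_inf_lt => [_ [C HC <-] HCl]; exists C.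
case/choice => Cs HCs.
pose D := (fun p : seq {set V} * seq {set V} => p.1 ++ p.2) @` (setT `*`` Cs).
apply: (@le_trans _ _ (\esum_(v in D) f v)).
  apply: ereal_inf_lbound; exists D => //; split.
    move=> _ [[u v] [_ /= Cv] <-]; rewrite size_cat /=.
    by apply: leq_trans (leq_addl _ _); apply: (HCs u).1.1.
  move=> w [Hinv [i Hi]].
  have LGw : L_Ginvnfair Binv Bfair (Defs.suffix w i).
    by move=> j; rewrite suffixS Hinv /= -suffixS Hi.
  have [k Hk] := (HCs (oprefix w i)).1.2 _ LGw.
  exists (i + k)%N; exists (oprefix w i, oprefix (Defs.suffix w i) k) => //.
  by rewrite oprefixD.
have r1 : (1 <= (alph_size V)%:R :> R)%R.
  rewrite ler1n /alph_size; apply/card_gt0P; by exists finset.set0.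
apply: (@le_trans _ _ (\esum_(p in setT `*`` Cs) f p.2)).
  apply: le_trans (esum_image_le ([::],[::]) _ _ _) _.
  apply: le_esum => -[u v] _ /=; rewrite lee_fin; apply: ler_powR => //.
  rewrite size_cat natrD mulrDr gerDr mulNr oppr_le0.
  by apply: mulr_ge0.
rewrite -(esum_esum (I := setT) (J := Cs) (a := fun _ v => f v)); last first.
  by move=> *; rewrite lee_fin powR_ge0.
apply: (@le_trans _ _ (\esum_(u in setT) (d u)%:E)).
  by apply: le_esum => u _; exact: ltW (HCs u).2.
have -> : \esum_(u in [set: seq {set V}]) (d u)%:E =
    \esum_(i in (@pickle (seq {set V})) @` setT) (eps / (2 ^ i.+1)%:R)%:E.
  by rewrite esum_image //; move=> x y _ _; apply: pickle_inj.
apply: le_trans (esum_subset_le _ (@subsetT _ _)) _.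
rewrite -nneseries_esumT; last by move=> i; rewrite lee_fin divr_ge0 // ltW.
exact: epsilon_trick0 (ltW eps0).
Qed.

Theorem theorem5 (R : realType) (V : finType)
  (Binv : bexp (V + V)) (Bfair : bexp V) :
  hdim R (L_phic Binv Bfair) = hdim R (L_Ginvnfair Binv Bfair).
Proof.
have sub : L_Ginvnfair Binv Bfair `<=` L_phic Binv Bfair.
  move=> w Hw; split; first by move=> j; case/andP: (Hw j).
  by exists 0%N => k; rewrite suffixS add0n; case/andP: (Hw k).
rewrite /hdim; congr ereal_inf; congr image.
apply: funext => a; apply: propext; split => -[a0 Ha]; split => //.
  apply/hmeasure0P => n; apply: le_anti; rewrite hcover_ge0 andbT.
  by move/hmeasure0P: Ha => Ha; rewrite -(Ha n); exact: (hcover_anti a n sub).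
by move/hmeasure0P: Ha => Ha; apply/hmeasure0P; exact: stepB.
Qed.
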